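(* The mapping $\mathbb H\times(0,1)\times(\mathbb R/2\pi\mathbb Z)\ni(z,t,\theta)\mapsto h_{-it}(z,\theta)\in\mathbb H^{\mathbb C}$ is a diffeomorphism onto a set of the form $U\setminus\mathbb H$, where $U\subset\mathbb H^{\mathbb C}$ is an open neighbourhood of $\mathbb H$.
   Context: $\mathbb H=\{x+iy: y>0\}$ is the hyperbolic plane with metric $(dx^2+dy^2)/y^2$. $\mathbb H^{\mathbb C}:=\mathbb C\times\mathbb C\ni(X,Y)$, with $\mathbb H$ embedded as $\{(x,y): x\in\mathbb R, y>0\}$. A right horocycle is any image of the curve $t\mapsto -t+i$ ($t\in\mathbb R$) under an orientation-preserving isometry of $\mathbb H$ (unit-speed curve of constant geodesic curvature $1$ curving to the right). For $z=x+iy\in\mathbb H$ and $\theta\in\mathbb R/2\pi\mathbb Z$ let $\phi$ be the unique right horocycle with $\phi(0)=z$, $\phi'(0)=y(\cos\theta\,\partial_x+\sin\theta\,\partial_y)$, and set $h_t(z,\theta):=(\Re\phi(t),\Im\phi(t))$ for $t\in\mathbb R$. The functions $t\mapsto\Re\phi(t),\Im\phi(t)$ extend holomorphically to $\{|\Im t|<1\}$, giving $h_t(z,\theta)\in\mathbb C\times\mathbb C$ for such complex $t$; e.g. $h_t(x+iy,\pi)=(x-ty,y)$ and every right horocycle is, up to time shift, $t\mapsto x_0+\frac{y_0t}{t^2+1}+i\frac{y_0}{t^2+1}$ or $t\mapsto x_0-ty_0+iy_0$. *)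

(* Defs.v *)
From HB Require Import structures.
From mathcomp Require Import all_boot all_order all_algebra.
From mathcomp Require Import all_classical all_reals all_analysis.
Set Implicit Arguments. Unset Strict Implicit. Unset Printing Implicit Defensive.
Import Order.TTheory GRing.Theory Num.Theory.
Import numFieldNormedType.Exports.
Local Open Scope classical_set_scope.
Local Open Scope ring_scope.

Fixpoint iter_derive {R : numFieldType} {V W : normedModType R}
  (vs : seq V) (f : V -> W) : V -> W :=
  match vs with
  | [::] => f
  | v :: vs' => fun x => 'D_v (iter_derive vs' f) x
  end.

Definition smooth_on {R : numFieldType} {V W : normedModType R}
  (A : set V) (f : V -> W) : Prop :=
  forall vs : seq V,
    (forall x, A x -> {for x, continuous (iter_derive vs f)}) /\
    (forall v x, A x -> derivable (iter_derive vs f) x v).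

(* H^C = C x C identified with R^4 via (X, Y) |-> (Re X, Im X, Re Y, Im Y). *)
Definition HC (R : realType) := (R * R * R * R)%type.

(* The copy of the hyperbolic plane H inside H^C: real points with y > 0. *)
Definition Hemb {R : realType} : set (HC R) :=
  [set w | w.1.1.2 = 0 /\ w.2 = 0 /\ 0 < w.1.2].

(* Parameter domain H x (0,1) x R (the angle theta is lifted to R; all maps
   below are 2pi-periodic in theta). *)
Definition param_dom {R : realType} : set (R * R * R * R) :=
  [set p | 0 < p.1.1.2 /\ 0 < p.1.2 < 1].

(* h_tau(x+iy, theta) for complex tau = tau1 + i tau2, in real coordinates.
   For real tau it is (Re phi(tau), Im phi(tau)) with
     phi(tau) = x + y N(tau)/D(tau) + i y/D(tau),
     D(tau) = 1 - tau sin theta + tau^2 (1 + cos theta)/2,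
     N(tau) = tau cos theta + tau^2 (sin theta)/2,
   and the complex extension is the same rational expression in complex tau. *)
Definition hC {R : realType} (x y th tau1 tau2 : R) : HC R :=
  let c := cos th in let s := sin th in
  (* tau^2 = (tau1^2 - tau2^2) + i (2 tau1 tau2) *)
  let sq1 := tau1 ^+ 2 - tau2 ^+ 2 in let sq2 := 2 * tau1 * tau2 in
  let d1 := 1 - tau1 * s + sq1 * (1 + c) / 2 in
  let d2 := - tau2 * s + sq2 * (1 + c) / 2 in
  let n1 := tau1 * c + sq1 * s / 2 in
  let n2 := tau2 * c + sq2 * s / 2 in
  let q := d1 ^+ 2 + d2 ^+ 2 in
  (* N/D = ((n1 d1 + n2 d2) + i (n2 d1 - n1 d2)) / q ;  1/D = (d1 - i d2)/q *)
  (x + y * (n1 * d1 + n2 * d2) / q, y * (n2 * d1 - n1 * d2) / q,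
   y * d1 / q, - (y * d2) / q).

Definition Fmap {R : realType} (p : R * R * R * R) : HC R :=
  let: (x, y, t, th) := p in hC x y th 0 (- t).

(* Main.v *)
Require Import Defs.
From HB Require Import structures.
From mathcomp Require Import all_boot all_order all_algebra.
From mathcomp Require Import all_classical all_reals all_analysis.
From mathcomp Require Import ring lra.
Import Order.TTheory GRing.Theory Num.Theory.
Import numFieldNormedType.Exports.
Local Open Scope classical_set_scope.
Local Open Scope ring_scope.
Ltac sidec := try done; rewrite ?mulf_neq0 ?expf_neq0 ?invr_neq0 //; repeat (apply/andP; split); try done; apply/eqP => H0; nra.
Section Alg.
Variable R : realType.

Definition hCcs (x y c s tau1 tau2 : R) : HC R :=
  let sq1 := tau1 ^+ 2 - tau2 ^+ 2 in let sq2 := 2 * tau1 * tau2 in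
  let d1 := 1 - tau1 * s + sq1 * (1 + c) / 2 in
  let d2 := - tau2 * s + sq2 * (1 + c) / 2 in
  let n1 := tau1 * c + sq1 * s / 2 in
  let n2 := tau2 * c + sq2 * s / 2 in
  let q := d1 ^+ 2 + d2 ^+ 2 in
  (x + y * (n1 * d1 + n2 * d2) / q, y * (n2 * d1 - n1 * d2) / q,
   y * d1 / q, - (y * d2) / q).

Lemma Fmap_hCcs (x y t th : R) : Fmap (x, y, t, th) = hCcs x y (cos th) (sin th) 0 (- t).
Proof. by []. Qed.

Definition d1 (t c : R) := 1 - t^+2 * (1 + c) / 2.
Definition d2 (t s : R) := t * s.
Definition n1 (t s : R) := - (t^+2 * s / 2).
Definition n2 (t c : R) := - (t * c).
Definition qq (t c s : R) := d1 t c ^+2 + d2 t s ^+2.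
Definition Fc (x y t c s : R) : HC R :=
  (x + y * (n1 t s * d1 t c + n2 t c * d2 t s) / qq t c s,
   y * (n2 t c * d1 t c - n1 t s * d2 t s) / qq t c s,
   y * d1 t c / qq t c s, - (y * d2 t s) / qq t c s).

Lemma hCcs_Fc (x y t c s : R) : hCcs x y c s 0 (- t) = Fc x y t c s.
Proof.
rewrite /hCcs /Fc.
have -> : 1 - 0 * s + ((0:R) ^+ 2 - (- t) ^+ 2) * (1 + c) / 2 = d1 t c by rewrite /d1; ring.
have -> : - - t * s + 2 * 0 * - t * (1 + c) / 2 = d2 t s by rewrite /d2; ring.
have -> : 0 * c + ((0:R) ^+ 2 - (- t) ^+ 2) * s / 2 = n1 t s by rewrite /n1; ring.
have -> : - t * c + 2 * 0 * - t * s / 2 = n2 t c by rewrite /n2; ring.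
by [].
Qed.

Definition cG (t r1 r2 : R) := (r2^+2 * t * (2 - t^+2) - 4 * r1) / (t * (4 + r2^+2 * t^+2)).
Definition sG (t r2 c : R) := - (r2 * d1 t c) / t.

Lemma inv_circle (t r1 r2 : R) (ht : 0 < t)
  (hr : r1^+2 = t^+2 + t^+2 * r2^+2 - r2^+2) :
  cG t r1 r2 ^+ 2 + sG t r2 (cG t r1 r2) ^+2 = 1.
Proof.
have h4 : 4 + r2^+2 * t^+2 != 0.
  by apply: lt0r_neq0; have := sqr_ge0 r2; have := sqr_ge0 t; nra.
rewrite /sG /cG /d1; field: hr; sidec.
Qed.

Lemma inv_K1 (t r2 c : R) (ht : 0 < t) : d2 t (sG t r2 c) = - r2 * d1 t c.
Proof. rewrite /d2 /sG; field; sidec. Qed.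

Lemma inv_K2 (t r1 r2 : R) (ht : 0 < t) :
  n2 t (cG t r1 r2) + r2 * n1 t (sG t r2 (cG t r1 r2)) = r1.
Proof.
have h4 : 4 + r2^+2 * t^+2 != 0.
  by apply: lt0r_neq0; have := sqr_ge0 r2; have := sqr_ge0 t; nra.
rewrite /n1 /n2 /sG /cG /d1; field; sidec.
Qed.

Lemma Fc_inv (X1 Y1 r1 r2 t c s : R) (hd1 : d1 t c != 0)
  (K1 : d2 t s = - r2 * d1 t c) (K2 : n2 t c + r2 * n1 t s = r1) :
  Fc (X1 - (Y1 * n1 t s - r2 * Y1 * n2 t c)) (Y1 * d1 t c - r2 * Y1 * d2 t s) t c s
  = (X1, r1 * Y1, Y1, r2 * Y1).
Proof.
have hr2 : 1 + r2^+2 != 0.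
  by apply: lt0r_neq0; have := sqr_ge0 r2; nra.
rewrite /Fc /qq K1 -K2; congr (_, _, _, _); field.
all: have -> : d1 t c ^+ 2 + (- r2 * d1 t c) ^+ 2 = d1 t c ^+ 2 * (1 + r2^+2) by ring.
all: by rewrite mulf_neq0 // expf_neq0.
Qed.


Lemma Fc_inv' (X1 X2 Y1 Y2 r1 r2 t c s : R) (hd1 : d1 t c != 0)
  (hX2 : X2 = r1 * Y1) (hY2 : Y2 = r2 * Y1)
  (K1 : d2 t s = - r2 * d1 t c) (K2 : n2 t c + r2 * n1 t s = r1) :
  Fc (X1 - (Y1 * n1 t s - Y2 * n2 t c)) (Y1 * d1 t c - Y2 * d2 t s) t c s
  = (X1, X2, Y1, Y2).
Proof. by rewrite hX2 hY2; apply: Fc_inv. Qed.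

Definition Tr (X2 Y1 Y2 : R) := (X2^+2 + Y2^+2) / (Y1^+2 + Y2^+2).
Definition Gr (X1 X2 Y1 Y2 : R) : R * R * R * (R * R) :=
  let t := Num.sqrt (Tr X2 Y1 Y2) in let r1 := X2 / Y1 in let r2 := Y2 / Y1 in
  let c := cG t r1 r2 in let s := sG t r2 c in
  (X1 - (Y1 * n1 t s - Y2 * n2 t c), Y1 * d1 t c - Y2 * d2 t s, t, (c, s)).

Lemma d1_gt0 (t c : R) : 0 < t < 1 -> c ^+ 2 <= 1 -> 0 < d1 t c.
Proof.
move=> /andP[t0 t1] hc; rewrite /d1.
have c1 : c <= 1 by nra.
have c2 : -1 <= c by nra.
have tt : t ^+ 2 < 1 by nra.
have : t ^+ 2 * (1 + c) <= t ^+ 2 * 2 by rewrite ler_pM2l ?exprn_gt0 //; lra.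
lra.
Qed.

Lemma Gr_inv (X1 X2 Y1 Y2 : R) (hY1 : 0 < Y1) (hX : X2 ^+ 2 < Y1 ^+ 2)
  (h0 : 0 < X2 ^+ 2 + Y2 ^+ 2) :
  let g := Gr X1 X2 Y1 Y2 in
  [/\ 0 < g.1.1.2, 0 < g.1.2 < 1, g.2.1 ^+ 2 + g.2.2 ^+ 2 = 1 &
      Fc g.1.1.1 g.1.1.2 g.1.2 g.2.1 g.2.2 = (X1, X2, Y1, Y2)].
Proof.
rewrite /Gr /=.
set T := Tr X2 Y1 Y2.
have hden : 0 < Y1 ^+ 2 + Y2 ^+ 2 by have := sqr_ge0 Y2; nra.
have T0 : 0 < T by rewrite /T /Tr divr_gt0.
have T1 : T < 1 by rewrite /T /Tr ltr_pdivrMr // mul1r; lra.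
set t := Num.sqrt T.
have tT : t ^+ 2 = T by rewrite sqr_sqrtr // ltW.
have t0 : 0 < t by rewrite sqrtr_gt0.
have t1 : t < 1 by nra.
have ht : 0 < t < 1 by rewrite t0 t1.
set r1 := X2 / Y1; set r2 := Y2 / Y1.
have hr : r1^+2 = t^+2 + t^+2 * r2^+2 - r2^+2.
  rewrite tT /T /Tr /r1 /r2; field; sidec.
have circ := inv_circle t r1 r2 t0 hr.
set c := cG t r1 r2 in circ *; set s := sG t r2 c in circ *.
have hc : c ^+ 2 <= 1 by have := sqr_ge0 s; lra.
have hd1 := d1_gt0 _ _ ht hc.
have hX2 : X2 = r1 * Y1 by rewrite /r1; field; sidec.
have hY2 : Y2 = r2 * Y1 by rewrite /r2; field; sidec.
have K1 : d2 t s = - r2 * d1 t c by exact: inv_K1.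
have K2 : n2 t c + r2 * n1 t s = r1 by exact: inv_K2.
split => //.
- rewrite hY2 K1 (_ : _ - _ = Y1 * d1 t c * (1 + r2 ^+ 2)); last by ring.
  by rewrite !mulr_gt0 //; have := sqr_ge0 r2; lra.
- exact: (Fc_inv' X1 X2 Y1 Y2 r1 r2 t c s (lt0r_neq0 hd1) hX2 hY2 K1 K2).
Qed.

Lemma Gr_fwd (x y t c s : R) (hy : 0 < y) (ht : 0 < t < 1) (hcs : c^+2 + s^+2 = 1) :
  let w := Fc x y t c s in
  [/\ 0 < w.1.2, w.1.1.2 ^+ 2 < w.1.2 ^+ 2, 0 < w.1.1.2 ^+ 2 + w.2 ^+ 2 &
      Gr w.1.1.1 w.1.1.2 w.1.2 w.2 = (x, y, t, (c, s))].
Proof.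
have hs : s^+2 = 1 - c^+2 by rewrite -hcs; ring.
have hc : c ^+ 2 <= 1 by have := sqr_ge0 s; lra.
have hd1 := d1_gt0 _ _ ht hc.
have hq : 0 < qq t c s by rewrite /qq; have := sqr_ge0 (d2 t s); nra.
case/andP: ht => t0 t1.
rewrite /Fc /=.
set D1 := d1 t c in hd1 *; set D2 := d2 t s; set N1 := n1 t s; set N2 := n2 t c.
set Q := qq t c s in hq *.
have QE : Q = D1 ^+ 2 + D2 ^+ 2 by [].
have y0 : y != 0 by rewrite gt_eqF.
have Q0 : Q != 0 by rewrite gt_eqF.
have D10 : D1 != 0 by rewrite gt_eqF.
have hP : (N2 * D1 - N1 * D2) ^+ 2 + D2 ^+ 2 = t ^+ 2 * Q.
  rewrite QE /N1 /N2 /D1 /D2 /n1 /n2 /d1 /d2; field: hs; sidec.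
have hY1 : 0 < y * D1 / Q by rewrite !mulr_gt0 // invr_gt0.
have hT : Tr (y * (N2 * D1 - N1 * D2) / Q) (y * D1 / Q) (- (y * D2) / Q) = t ^+ 2.
  have E1 : (y * (N2 * D1 - N1 * D2) / Q) ^+ 2 + (- (y * D2) / Q) ^+ 2 = y ^+ 2 * (t ^+ 2 * Q) / Q ^+ 2.
    by rewrite -hP; field; sidec.
  have E2 : (y * D1 / Q) ^+ 2 + (- (y * D2) / Q) ^+ 2 = y ^+ 2 * Q / Q ^+ 2.
    by rewrite [X in y ^+ 2 * X]QE; field; sidec.
  by rewrite /Tr E1 E2; field; sidec.
have hr1 : y * (N2 * D1 - N1 * D2) / Q / (y * D1 / Q) = (N2 * D1 - N1 * D2) / D1 by field; sidec.
have hr2 : - (y * D2) / Q / (y * D1 / Q) = - D2 / D1 by field; sidec.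
have hb : 0 < (y * D1 / Q) ^+ 2 + (- (y * D2) / Q) ^+ 2.
  by have := sqr_ge0 (- (y * D2) / Q); nra.
have hab : (y * (N2 * D1 - N1 * D2) / Q) ^+ 2 + (- (y * D2) / Q) ^+ 2 =
    t ^+ 2 * ((y * D1 / Q) ^+ 2 + (- (y * D2) / Q) ^+ 2).
  have hyd : 0 < y * D1 by rewrite mulr_gt0.
  have := sqr_ge0 (- (y * D2)).
  move: (hT); rewrite /Tr => <- ?; field; sidec.
rewrite /Gr hT sqrtr_sqr gtr0_norm // hr1 hr2.
have hcG : cG t ((N2 * D1 - N1 * D2) / D1) (- D2 / D1) = c.
  have hd1' : 0 < 2 - t^+2 * (1 + c) by move: hd1; rewrite /D1 /d1; lra.
  rewrite /cG /N1 /N2 /D1 /D2 /n1 /n2 /d1 /d2; field; sidec.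
rewrite hcG.
have hsG : sG t (- D2 / D1) c = s.
  rewrite /sG -/D1 /D2 /d2; field; sidec.
rewrite hsG -/D1 -/D2 -/N1 -/N2.
split => //.
- have tt : t ^+ 2 < 1 by nra.
  move: hab hb tt.
  set A := (y * (N2 * D1 - N1 * D2) / Q) ^+ 2; set B := (y * D1 / Q) ^+ 2.
  set C := (- (y * D2) / Q) ^+ 2; set T2 := t ^+ 2.
  have : 0 <= T2 by rewrite /T2 sqr_ge0.
  nra.
- have tt : 0 < t ^+ 2 by rewrite exprn_gt0.
  move: hab hb tt.
  set A := (y * (N2 * D1 - N1 * D2) / Q) ^+ 2; set B := (y * D1 / Q) ^+ 2.
  set C := (- (y * D2) / Q) ^+ 2; set T2 := t ^+ 2.
  nra.
- congr (_, _, _, _); rewrite QE; field; sidec.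
Qed.
End Alg.

Section Trig.
Variable R : realType.

Lemma cos_periodz (x : R) (k : int) : cos (x + k%:~R * (2 * pi)) = cos x.
Proof.
have P := @periodicn _ _ (@cos R) (pi *+ 2) (@cosD2pi R).
have E : forall n : nat, n%:R * (2 * pi) = (pi *+ 2) *+ n :> R.
  by move=> n; rewrite -mulr_natl mulr2n; ring.
case: k => n.
- by rewrite (_ : (Posz n)%:~R = n%:R :> R) // E P.
- rewrite NegzE mulrNz mulNr (_ : (Posz n.+1)%:~R = n.+1%:R :> R) // E.
  by rewrite -[in RHS](subrK ((pi *+ 2) *+ n.+1) x) P.
Qed.

Lemma cos1_eq0 (r : R) : 0 <= r < 2 * pi -> cos r = 1 -> r = 0.
Proof.
move=> /andP[r0 r2] cr.
have hpi : 0 < (pi : R) := pi_gt0 R.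
have [rpi|pir] := leP r pi.
  have := @cosK R r; rewrite in_itv /= r0 rpi cr acos1 => /(_ isT) //.
have r'0 : 0 <= 2 * pi - r <= pi by apply/andP; split; lra.
have := @cosK R (2 * pi - r); rewrite in_itv /= r'0 => /(_ isT).
rewrite -[2 * pi - r]addrC -[2 * pi]mul1r -[1]/((1:int)%:~R) cos_periodz cosN cr acos1.
lra.
Qed.

Lemma cos_sin_eq (a b : R) : cos a = cos b -> sin a = sin b ->
  exists k : int, a = b + k%:~R * (2 * pi).
Proof.
move=> ca sa.
have cd : cos (a - b) = 1 by rewrite cosB ca sa -!expr2 cos2Dsin2.
have hpi : 0 < (pi : R) := pi_gt0 R.
have h2pi : 0 < 2 * (pi : R) by apply: mulr_gt0.
set d := a - b in cd.
pose k := Num.floor (d / (2 * pi)).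
exists k.
have kle : k%:~R <= d / (2 * pi) by rewrite /k floor_le.
have kgt : d / (2 * pi) < k%:~R + 1 by rewrite /k -[1]/((1:int)%:~R) -intrD floorD1_gt.
set K := (k%:~R : R) in kle kgt *.
have r0 : 0 <= d - K * (2 * pi) <= 2 * pi.
  rewrite ler_pdivlMr // in kle; rewrite ltr_pdivrMr // in kgt.
  apply/andP; split; lra.
have r1 : d - K * (2 * pi) < 2 * pi.
  rewrite ltr_pdivrMr // in kgt; lra.
have cr : cos (d - K * (2 * pi)) = 1.
  by rewrite -(cos_periodz _ k) -/K subrK.
have := cos1_eq0 (d - K * (2 * pi)); rewrite r1 andbT; case/andP: r0 => -> _.
move=> /(_ isT cr) hd; rewrite /d in hd; lra.
Qed.

Lemma cos_sin_surj (c s : R) : c ^+ 2 + s ^+ 2 = 1 -> exists th : R, cos th = c /\ sin th = s.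
Proof.
move=> hcs.
have hc : -1 <= c <= 1 by apply/andP; split; nra.
have hs : Num.sqrt (1 - c ^+ 2) = `|s| by rewrite -sqrtr_sqr; congr Num.sqrt; lra.
have [s0|s0] := leP 0 s.
- exists (acos c); rewrite acosK ?in_itv //= sin_acos // hs ger0_norm //.
- exists (- acos c); rewrite cosN sinN acosK ?in_itv //= sin_acos // hs ltr0_norm //.
  by rewrite opprK.
Qed.
End Trig.

Section Gen.
Variables (R : realType) (V W : normedModType R).

Lemma derive_line (f : V -> W) x v :
  'D_v f x = 'D_1 (fun h : R => f (h *: v + x)) 0.
Proof.
rewrite /derive; set g1 := fun h => h^-1 *: _; set g2 := fun h => h^-1 *: _.
suff -> : g1 = g2 by [].
by rewrite funeqE /g1 /g2 => h /=; rewrite addr0 scale0r add0r [_%:A]mulr1.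
Qed.

Lemma is_derive_line (f : V -> W) x v (df : W) :
  is_derive x v f df <-> is_derive (0 : R) 1 (fun h : R => f (h *: v + x)) df.
Proof.
split=> -[d e]; split.
- by move/derivable1P: d.
- by rewrite -derive_line.
- by apply/derivable1P.
- by rewrite derive_line.
Qed.

End Gen.
Arguments derive_line {R V W}.
Arguments is_derive_line {R V W}.
Section Gen2.
Variables (R : realType) (V W : normedModType R).

Lemma is_deriveV' (f : V -> R) x v (df : R) : f x != 0 ->
  is_derive x v f df -> is_derive x v (fun y => (f y)^-1) (- (f x) ^- 2 *: df).
Proof.
move=> fx0 [d e]; split; first exact: derivableV.
by rewrite deriveV // e.
Qed.

Lemma is_derive_chain (f : V -> R) (g : R -> R) x v (df dg : R) :
  is_derive x v f df -> is_derive (f x) 1 g dg ->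
  is_derive x v (fun y => g (f y)) (dg * df).
Proof.
move=> Hf [dg1 eg]; have [dk ek] := proj1 (is_derive_line f x v df) Hf.
apply: (proj2 (is_derive_line _ _ _ _)).
set k := fun h : R => f (h *: v + x) in dk ek *.
have k0 : k 0 = f x by rewrite /k scale0r add0r.
have dkd : differentiable k 0 by apply/derivable1_diffP.
have dgd : differentiable g (k 0) by rewrite k0; apply/derivable1_diffP.
split.
- by apply/derivable1_diffP; apply: differentiable_comp.
- have := @derive1_comp R k g 0; rewrite !derive1E => -> //.
  + by rewrite k0 eg ek.
  + by apply/derivable1_diffP.
Qed.

Lemma is_derive_pair (W' : normedModType R) (f : V -> W) (g : V -> W') x v df dg :
  is_derive x v f df -> is_derive x v g dg ->
  is_derive x v (fun y => (f y, g y)) (df, dg).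
Proof.
move=> [d1 e1] [d2 e2].
have C : (fun h : R => h^-1 *: (((fun y => (f y, g y)) \o shift x) (h *: v) - (f x, g x))) @ 0^'
   --> (df, dg).
  rewrite -e1 -e2.
  exact: (cvg_pair d1 d2).
split; first by apply/cvg_ex; exists (df, dg).
exact: cvg_lim C.
Qed.

Lemma near_eq_cont (T : topologicalType) (f g : T -> W) x :
  (\near x, f x = g x) -> {for x, continuous f} -> {for x, continuous g}.
Proof.
move=> fg cf; have fgx : f x = g x by apply: nbhs_singleton fg.
move: cf; rewrite /prop_for /continuous_at fgx => cf.
by apply: cvg_trans cf; apply: near_eq_cvg.
Qed.
End Gen2.
Arguments near_eq_cont {R W T f g x}.
Arguments is_derive_chain {R V f g x v df dg}.
Arguments is_derive_pair {R V W W' f g x v df dg}.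
Arguments is_deriveV' {R V f x v df}.

Section Cls.
Variables (R : realType) (V W : normedModType R).

Lemma open_near (A : set V) x : open A -> A x -> \forall y \near x, A y.
Proof.
move=> oA Ax; have : open_nbhs x A by split.
by rewrite open_nbhsE => -[].
Qed.

Definition closedD (A : set V) (S : (V -> W) -> Prop) :=
  (forall f, S f -> forall x, A x -> {for x, continuous f}) /\
  (forall f v, S f -> exists g, S g /\ forall x, A x -> is_derive x v f (g x)).

Lemma closedD_smooth (A : set V) (S : (V -> W) -> Prop) f :
  open A -> closedD A S -> S f -> smooth_on A f.
Proof.
move=> oA [Sc Sd] Sf.
have key : forall vs, exists g, S g /\ forall x, A x -> iter_derive vs f x = g x.
  elim => [|v vs [g [Sg eg]]] /=; first by exists f.
  have [g' [Sg' eg']] := Sd g v Sg.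
  exists g'; split => // x Ax.
  rewrite -(@derive_val _ _ _ _ _ _ _ (eg' x Ax)).
  apply: near_eq_derive.
  near=> y; rewrite eg //; near: y; exact: open_near oA Ax.
move=> vs; have [g [Sg eg]] := key vs.
have ne : forall x, A x -> \forall y \near x, g y = iter_derive vs f y.
  by move=> x Ax; near=> y; rewrite eg //; near: y; exact: open_near oA Ax.
split.
- by move=> x Ax; apply: (near_eq_cont (ne x Ax)); apply: Sc.
- move=> v x Ax; apply: (near_eq_derivable (ne x Ax)).
  by have [g' [_ eg']] := Sd g v Sg; have [] := eg' x Ax.
Unshelve. all: by end_near.
Qed.
End Cls.

Arguments open_near {R V A x}.
Arguments closedD {R V W}.
Arguments closedD_smooth {R V W A S f}.
Section SmR.
Variable R : realType.
Local Notation V := (R * R * R * R)%type.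

Lemma is_derive_affine (a b : R) : is_derive (0:R) 1 (fun h : R => h * a + b) a.
Proof.
have E : (fun h : R => h * a + b) = (id * cst a) + cst b by apply: funext.
rewrite E; apply: is_derive_eq.
by rewrite scaler0 add0r addr0 /cst [_%:A]mulr1.
Qed.

Lemma is_derive_proj (pr : V -> R) x v :
  (forall h : R, pr (h *: v + x) = h * pr v + pr x) -> is_derive x v pr (pr v).
Proof.
move=> H; apply/(is_derive_line pr x v (pr v)).
have -> : (fun h : R => pr (h *: v + x)) = (fun h : R => h * pr v + pr x) by apply: funext.
exact: is_derive_affine.
Qed.

Lemma cont_fst (T U : topologicalType) (x : T * U) : {for x, continuous (@fst T U)}.
Proof. exact: cvg_fst. Qed.
Lemma cont_snd (T U : topologicalType) (x : T * U) : {for x, continuous (@snd T U)}.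
Proof. exact: cvg_snd. Qed.

Lemma cont_p1 (x : V) : {for x, continuous (fun p : V => p.1.1.1)}.
Proof.
have := continuous_comp (cont_fst _ _ x) (continuous_comp (cont_fst _ _ x.1) (cont_fst _ _ x.1.1)).
by [].
Qed.
Lemma cont_p2 (x : V) : {for x, continuous (fun p : V => p.1.1.2)}.
Proof.
have := continuous_comp (cont_fst _ _ x) (continuous_comp (cont_fst _ _ x.1) (cont_snd _ _ x.1.1)).
by [].
Qed.
Lemma cont_p3 (x : V) : {for x, continuous (fun p : V => p.1.2)}.
Proof. have := continuous_comp (cont_fst _ _ x) (cont_snd _ _ x.1). by []. Qed.
Lemma cont_p4 (x : V) : {for x, continuous (fun p : V => p.2)}.
Proof. exact: cont_snd. Qed.

Inductive Sm (A : set V) : (V -> R) -> Prop :=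
| Sm_cst c : Sm A (fun _ => c)
| Sm_p1 : Sm A (fun p => p.1.1.1)
| Sm_p2 : Sm A (fun p => p.1.1.2)
| Sm_p3 : Sm A (fun p => p.1.2)
| Sm_p4 : Sm A (fun p => p.2)
| Sm_add f g : Sm A f -> Sm A g -> Sm A (fun p => f p + g p)
| Sm_mul f g : Sm A f -> Sm A g -> Sm A (fun p => f p * g p)
| Sm_inv f : Sm A f -> (forall x, A x -> f x != 0) -> Sm A (fun p => (f p)^-1)
| Sm_cos f : Sm A f -> Sm A (fun p => cos (f p))
| Sm_sin f : Sm A f -> Sm A (fun p => sin (f p))
| Sm_sqrt f : Sm A f -> (forall x, A x -> 0 < f x) -> Sm A (fun p => Num.sqrt (f p))
| Sm_ext f g : Sm A f -> (forall x, A x -> f x = g x) -> Sm A g.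

Lemma Sm_cont (A : set V) f : open A -> Sm A f -> forall x, A x -> {for x, continuous f}.
Proof.
move=> oA; elim => {f}.
- by move=> c x _; apply: cvg_cst.
- by move=> x _; apply: cont_p1.
- by move=> x _; apply: cont_p2.
- by move=> x _; apply: cont_p3.
- by move=> x _; apply: cont_p4.
- by move=> f g _ cf _ cg x Ax; apply: continuousD; [apply: cf|apply: cg].
- by move=> f g _ cf _ cg x Ax; apply: continuousM; [apply: cf|apply: cg].
- by move=> f _ cf nz x Ax; apply: continuousV; [apply: nz|apply: cf].
- move=> f _ cf x Ax; apply: (continuous_comp (cf x Ax)).
  exact: continuous_cos.
- move=> f _ cf x Ax; apply: (continuous_comp (cf x Ax)).
  exact: continuous_sin.
- move=> f _ cf _ x Ax; apply: (continuous_comp (cf x Ax)).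
  exact: sqrt_continuous.
- move=> f g _ cf fg x Ax; apply: (near_eq_cont _ (cf x Ax)).
  by near=> y; apply: fg; near: y; exact: (open_near oA Ax).
Unshelve. all: by end_near.
Qed.

Lemma Sm_der (A : set V) f : open A -> Sm A f ->
  forall v, exists g, Sm A g /\ forall x, A x -> is_derive x v f (g x).
Proof.
move=> oA; elim => {f}.
- move=> c v; exists (fun _ => 0); split; first exact: Sm_cst.
  by move=> x _; exact: is_derive_cst.
- move=> v; exists (fun _ => v.1.1.1); split; first exact: Sm_cst.
  by move=> x _; apply: is_derive_proj.
- move=> v; exists (fun _ => v.1.1.2); split; first exact: Sm_cst.
  by move=> x _; apply: is_derive_proj.
- move=> v; exists (fun _ => v.1.2); split; first exact: Sm_cst.
  by move=> x _; apply: is_derive_proj.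
- move=> v; exists (fun _ => v.2); split; first exact: Sm_cst.
  by move=> x _; apply: is_derive_proj.
- move=> f g _ df _ dg v.
  have [f' [Sf' ef]] := df v; have [g' [Sg' eg]] := dg v.
  exists (fun p => f' p + g' p); split; first exact: Sm_add.
  by move=> x Ax; have := is_deriveD (ef x Ax) (eg x Ax).
- move=> f g Sf df Sg dg v.
  have [f' [Sf' ef]] := df v; have [g' [Sg' eg]] := dg v.
  exists (fun p => f p * g' p + g p * f' p); split.
    by apply: Sm_add; apply: Sm_mul.
  by move=> x Ax; have := is_deriveM (ef x Ax) (eg x Ax).
- move=> f Sf df nz v.
  have [f' [Sf' ef]] := df v.
  exists (fun p => (-1) * ((f p * f p)^-1 * f' p)); split.
    apply: Sm_mul; first exact: Sm_cst.
    apply: Sm_mul => //; apply: Sm_inv; first exact: Sm_mul.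
    by move=> x Ax; rewrite mulf_neq0 // nz.
  move=> x Ax; apply: is_derive_eq; first exact: (is_deriveV' (nz x Ax) (ef x Ax)).
  by rewrite expr2 mulN1r scaleNr.
- move=> f Sf df v.
  have [f' [Sf' ef]] := df v.
  exists (fun p => ((-1) * sin (f p)) * f' p); split.
    by apply: Sm_mul => //; apply: Sm_mul; [exact: Sm_cst|exact: Sm_sin].
  move=> x Ax; apply: is_derive_eq.
    exact: (is_derive_chain (ef x Ax) (is_derive_cos (f x))).
  by rewrite mulN1r.
- move=> f Sf df v.
  have [f' [Sf' ef]] := df v.
  exists (fun p => cos (f p) * f' p); split.
    by apply: Sm_mul => //; exact: Sm_cos.
  move=> x Ax; exact: (is_derive_chain (ef x Ax) (is_derive_sin (f x))).
- move=> f Sf df pos v.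
  have [f' [Sf' ef]] := df v.
  exists (fun p => (2 * Num.sqrt (f p))^-1 * f' p); split.
    apply: Sm_mul => //; apply: Sm_inv.
      by apply: Sm_mul; [exact: Sm_cst|exact: Sm_sqrt].
    by move=> x Ax; rewrite gt_eqF // mulr_gt0 // sqrtr_gt0 pos.
  move=> x Ax; exact: (is_derive_chain (ef x Ax) (is_derive1_sqrt (pos x Ax))).
- move=> f g Sf df fg v.
  have [f' [Sf' ef]] := df v.
  exists f'; split => // x Ax.
  apply: (near_eq_is_derive _ (ef x Ax)).
  by near=> y; apply: fg; near: y; exact: (open_near oA Ax).
Unshelve. all: by end_near.
Qed.

Lemma Sm_closedD (A : set V) : open A -> closedD A (Sm A).
Proof. by move=> oA; split; [move=> f Sf; exact: Sm_cont|move=> f v Sf; exact: Sm_der]. Qed.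

End SmR.

Arguments open_near {R V A x}.
Arguments closedD {R V W}.
Arguments closedD_smooth {R V W A S f}.
Arguments Sm {R}.
Arguments Fc {R}. Arguments hCcs {R}. Arguments d1 {R}. Arguments d2 {R}.
Arguments n1 {R}. Arguments n2 {R}. Arguments qq {R}. Arguments cG {R}.
Arguments sG {R}. Arguments Tr {R}. Arguments Gr {R}.
Arguments d1_gt0 {R t c}.
Arguments Sm_cst {R A}.
Arguments Sm_p1 {R A}. Arguments Sm_p2 {R A}. Arguments Sm_p3 {R A}. Arguments Sm_p4 {R A}.
Arguments Sm_add {R A f g}. Arguments Sm_mul {R A f g}. Arguments Sm_inv {R A f}.
Arguments Sm_cos {R A f}. Arguments Sm_sin {R A f}. Arguments Sm_sqrt {R A f}.
Arguments Sm_ext {R A f g}.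
Arguments Sm_cont {R A f}. Arguments Sm_der {R A f}. Arguments Sm_closedD {R A}.

Section Pair.
Variables (R : realType) (V W1 W2 : normedModType R).
Definition Spair (S1 : (V -> W1) -> Prop) (S2 : (V -> W2) -> Prop) : (V -> W1 * W2) -> Prop :=
  fun h => exists f g, [/\ S1 f, S2 g & h = (fun x => (f x, g x))].

Lemma closedD_pair (A : set V) S1 S2 : closedD A S1 -> closedD A S2 -> closedD A (Spair S1 S2).
Proof.
move=> [c1 d1] [c2 d2]; split.
- move=> _ [f [g [Sf Sg ->]]] x Ax.
  by apply: cvg_pair; [apply: c1|apply: c2].
- move=> _ v [f [g [Sf Sg ->]]].
  have [f' [Sf' ef]] := d1 f v Sf; have [g' [Sg' eg]] := d2 g v Sg.
  exists (fun x => (f' x, g' x)); split; first by exists f', g'.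
  by move=> x Ax; apply: is_derive_pair; [apply: ef|apply: eg].
Qed.
End Pair.
Arguments Spair {R V W1 W2}.
Arguments closedD_pair {R V W1 W2 A S1 S2}.

Section SmH.
Variable R : realType.
Local Notation V := (R * R * R * R)%type.
Variable A : set V.

Lemma SmN f : Sm A f -> Sm A (fun p => - f p).
Proof.
move=> Sf; apply: (Sm_ext (f := fun p => (-1) * f p)); last by move=> x _; rewrite mulN1r.
by apply: Sm_mul => //; apply: Sm_cst.
Qed.

Lemma SmX f n : Sm A f -> Sm A (fun p => f p ^+ n).
Proof.
move=> Sf; elim: n => [|n IH].
  by apply: (Sm_ext (f := fun _ => 1)); [apply: Sm_cst|move=> x _; rewrite expr0].
apply: (Sm_ext (f := fun p => f p * f p ^+ n)); first exact: Sm_mul.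
by move=> x _; rewrite exprS.
Qed.

Lemma open_pos (f : V -> R) : Sm setT f -> open [set x | 0 < f x].
Proof.
move=> Sf; have -> : [set x | 0 < f x] = f @^-1` [set x | 0 < x] by [].
apply: open_comp; last exact: open_gt.
by move=> x _; apply: (Sm_cont openT Sf).
Qed.
End SmH.

Ltac smt := repeat first [ apply: Sm_cst | apply: Sm_p1 | apply: Sm_p2 | apply: Sm_p3
  | apply: Sm_p4 | apply: Sm_add | apply: Sm_mul | apply: SmN | apply: SmX
  | apply: Sm_cos | apply: Sm_sin | apply: Sm_inv | apply: Sm_sqrt ].

Section Main.
Variable R : realType.
Local Notation V := (R * R * R * R)%type.

Lemma param_dom_open : open (@param_dom R).
Proof.
have -> : @param_dom R = [set p | 0 < p.1.1.2] `&` ([set p | 0 < p.1.2] `&` [set p | 0 < 1 - p.1.2]).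
  apply/seteqP; split => p /=.
  - by case=> y0 /andP[t0 t1]; split => //; split => //; rewrite subr_gt0.
  - by case=> y0 [t0]; rewrite subr_gt0 => t1; split => //; rewrite t0 t1.
apply: openI; first by apply: open_pos; smt.
by apply: openI; apply: open_pos; smt.
Qed.

Lemma Fmap_eq : @Fmap R = fun p => Fc p.1.1.1 p.1.1.2 p.1.2 (cos p.2) (sin p.2).
Proof. by apply: funext => -[[[x y] t] th]; rewrite Fmap_hCcs hCcs_Fc. Qed.

Lemma qq_pos (p : V) : param_dom p -> 0 < qq p.1.2 (cos p.2) (sin p.2).
Proof.
case=> _ ht.
have hc : cos p.2 ^+ 2 <= 1 by have := sqr_ge0 (sin p.2); have := cos2Dsin2 p.2; lra.
have := d1_gt0 ht hc; rewrite /qq => h.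
by have := sqr_ge0 (d2 p.1.2 (sin p.2)); nra.
Qed.

Lemma Fmap_smooth : smooth_on param_dom (@Fmap R).
Proof.
have oA := param_dom_open.
apply: (closedD_smooth oA (closedD_pair (closedD_pair (closedD_pair (Sm_closedD oA) (Sm_closedD oA)) (Sm_closedD oA)) (Sm_closedD oA))).
rewrite Fmap_eq /Fc.
set q := fun p : V => qq p.1.2 (cos p.2) (sin p.2).
have Sq : Sm param_dom q by rewrite /q /qq /d1 /d2; smt.
have nq : forall x, param_dom x -> q x != 0 by move=> x /qq_pos; rewrite /q => h; rewrite gt_eqF.
eexists; eexists; split; last by [].
- eexists; eexists; split; last by [].
  + eexists; eexists; split; last by [].
    * rewrite /n1 /n2 /d1 /d2; smt; exact: nq.
    * rewrite /n1 /n2 /d1 /d2; smt; exact: nq.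
  + rewrite /d1; smt; exact: nq.
- rewrite /d2; smt; exact: nq.
Qed.
End Main.

Arguments Sm {R}.
Arguments Fc {R}. Arguments hCcs {R}. Arguments d1 {R}. Arguments d2 {R}.
Arguments n1 {R}. Arguments n2 {R}. Arguments qq {R}. Arguments cG {R}.
Arguments sG {R}. Arguments Tr {R}. Arguments Gr {R}.
Arguments closedD_smooth {R V W A S f}.
Arguments Sm_closedD {R A}.
Arguments closedD_pair {R V W1 W2 A S1 S2}.

Ltac gside := move=> ? /Ugood_facts[? ? ? ? ?]; rewrite ?mulf_eq0 ?negb_or ?gt_eqF //.

Section G.
Variable R : realType.
Local Notation V := (R * R * R * R)%type.

Definition Ugood : set V :=
  [set w | 0 < w.1.2 /\ 0 < w.1.2 ^+ 2 - w.1.1.2 ^+ 2 /\ 0 < w.1.1.2 ^+ 2 + w.2 ^+ 2].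

Lemma Ugood_open : open Ugood.
Proof.
have -> : Ugood = [set w : V | 0 < w.1.2] `&` ([set w | 0 < w.1.2 ^+ 2 - w.1.1.2 ^+ 2]
   `&` [set w | 0 < w.1.1.2 ^+ 2 + w.2 ^+ 2]) by [].
apply: openI; first by apply: open_pos; smt.
by apply: openI; apply: open_pos; smt.
Qed.

Lemma Ugood_facts (w : V) : Ugood w ->
  [/\ 0 < w.1.2, 0 < w.1.2 ^+ 2 + w.2 ^+ 2,
      0 < (w.1.1.2 ^+ 2 + w.2 ^+ 2) / (w.1.2 ^+ 2 + w.2 ^+ 2),
      0 < Num.sqrt ((w.1.1.2 ^+ 2 + w.2 ^+ 2) / (w.1.2 ^+ 2 + w.2 ^+ 2)) &
      0 < 4 + (w.2 / w.1.2) ^+ 2 * Num.sqrt ((w.1.1.2 ^+ 2 + w.2 ^+ 2) / (w.1.2 ^+ 2 + w.2 ^+ 2)) ^+ 2].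
Proof.
move=> [h1 [h2 h3]].
have hd : 0 < w.1.2 ^+ 2 + w.2 ^+ 2 by have := sqr_ge0 w.2; nra.
have hT : 0 < (w.1.1.2 ^+ 2 + w.2 ^+ 2) / (w.1.2 ^+ 2 + w.2 ^+ 2) by rewrite divr_gt0.
split => //; first by rewrite sqrtr_gt0.
have := sqr_ge0 (w.2 / w.1.2).
have := sqr_ge0 (Num.sqrt ((w.1.1.2 ^+ 2 + w.2 ^+ 2) / (w.1.2 ^+ 2 + w.2 ^+ 2))).
nra.
Qed.

Definition Gfun (w : HC R) : R * R * R * (R * R) := Gr w.1.1.1 w.1.1.2 w.1.2 w.2.

Lemma Gfun_smooth : smooth_on Ugood Gfun.
Proof.
have oA := Ugood_open.
apply: (closedD_smooth oA (closedD_pair (closedD_pair (closedD_pair (Sm_closedD oA) (Sm_closedD oA)) (Sm_closedD oA)) (closedD_pair (Sm_closedD oA) (Sm_closedD oA)))).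
rewrite /Gfun /Gr /cG /sG /Tr /d1 /d2 /n1 /n2 /=.
eexists; eexists; split; last by [].
eexists; eexists; split; last by [].
eexists; eexists; split; last by [].
4: eexists; eexists; split; last by [].
all: smt; gside.
Qed.
End G.

Theorem proposition2 (R : realType) :
  (* (z,t,theta) |-> h_{-it}(z,theta) is C^oo on H x (0,1) x (R/2piZ) *)
  smooth_on param_dom (@Fmap R) /\
  (* injective on H x (0,1) x (R/2piZ) *)
  (forall p q : R * R * R * R, param_dom p -> param_dom q -> Fmap p = Fmap q ->
     [/\ p.1.1.1 = q.1.1.1, p.1.1.2 = q.1.1.2, p.1.2 = q.1.2 &
         exists k : int, p.2 = q.2 + k%:~R * (2 * pi)]) /\
  exists U : set (HC R),
    [/\ open U, Hemb `<=` U,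
        (* the image is exactly U \ H *)
        Fmap @` param_dom = U `\` Hemb &
        (* the inverse U \ H -> H x (0,1) x S^1 (S^1 embedded in R^2) is C^oo *)
        exists G : HC R -> (R * R * R * (R * R))%type,
          smooth_on (U `\` Hemb) G /\
          forall (w : HC R) (p : R * R * R * R), (U `\` Hemb) w -> param_dom p ->
            (Fmap p = w <->
             G w = (p.1.1.1, p.1.1.2, p.1.2, (cos p.2, sin p.2)))].
Proof.
split; first exact: Fmap_smooth.
split.
  move=> [[[x y] t] th] [[[x' y'] t'] th'] [hy ht] [hy' ht'] E.
  rewrite !Fmap_eq /= in E.
  have [_ _ _ G1] := Gr_fwd _ x y t _ _ hy ht (cos2Dsin2 th).
  have [_ _ _ G2] := Gr_fwd _ x' y' t' _ _ hy' ht' (cos2Dsin2 th').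
  rewrite E G2 in G1.
  case: G1 => -> -> -> hc hs; split => //.
  by apply: cos_sin_eq.
pose U : set (HC R) := [set w | 0 < w.1.2 /\ w.1.1.2 ^+ 2 < w.1.2 ^+ 2].
have UH : U `\` Hemb = @Ugood R.
  apply/seteqP; split => w /=.
    case=> [[h1 h2] nH]; split => //; split; first by rewrite subr_gt0.
    have hn : w.1.1.2 ^+ 2 + w.2 ^+ 2 != 0.
      apply/eqP => h0; apply: nH.
      have hx : w.1.1.2 ^+ 2 = 0 by have := sqr_ge0 w.1.1.2; have := sqr_ge0 w.2; lra.
      have hy : w.2 ^+ 2 = 0 by have := sqr_ge0 w.1.1.2; have := sqr_ge0 w.2; lra.
      split; first by apply/eqP; rewrite -sqrf_eq0 hx.
      by split => //; apply/eqP; rewrite -sqrf_eq0 hy.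
    by rewrite lt_neqAle eq_sym hn addr_ge0 ?sqr_ge0.
  case=> [h1 [h2 h3]]; split; first by split => //; rewrite -subr_gt0.
  case=> hx [hy _]; move: h3; rewrite hx hy => h; nra.
exists U; split.
- have -> : U = [set w : HC R | 0 < w.1.2] `&` [set w | 0 < w.1.2 ^+ 2 - w.1.1.2 ^+ 2].
    by apply/seteqP; split => w /= [h1 h2]; split => //; move: h2; rewrite subr_gt0.
  by apply: openI; apply: open_pos; smt.
- move=> w [h1 [h2 h3]]; split => //.
  by rewrite h1 expr2 mul0r exprn_gt0.
- rewrite UH; apply/seteqP; split.
    move=> _ [[[[x y] t] th] [hy ht] <-].
    rewrite Fmap_eq /=.
    have [a b c _] := Gr_fwd _ x y t _ _ hy ht (cos2Dsin2 th).
    by split => //; split => //; rewrite subr_gt0.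
  move=> w [h1 [h2 h3]].
  have h2' : w.1.1.2 ^+ 2 < w.1.2 ^+ 2 by rewrite -subr_gt0.
  have [gy gt gcs gF] := Gr_inv _ w.1.1.1 w.1.1.2 w.1.2 w.2 h1 h2' h3.
  have [th [cth sth]] := cos_sin_surj _ _ _ gcs.
  exists ((Gr w.1.1.1 w.1.1.2 w.1.2 w.2).1.1.1, (Gr w.1.1.1 w.1.1.2 w.1.2 w.2).1.1.2,
          (Gr w.1.1.1 w.1.1.2 w.1.2 w.2).1.2, th).
    by split.
  rewrite Fmap_eq /= cth sth gF.
  by case: w {h1 h2 h3 h2' gy gt gcs gF cth sth} => [[[]]].
- exists (@Gfun R); split.
    by rewrite UH; exact: Gfun_smooth.
  move=> w [[[x y] t] th]; rewrite UH => hw [hy ht].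
  split.
    move=> <-; rewrite Fmap_eq /Gfun /=.
    by have [_ _ _ ->] := Gr_fwd _ x y t _ _ hy ht (cos2Dsin2 th).
  move=> GE.
  case: hw => h1 [h2 h3].
  have h2' : w.1.1.2 ^+ 2 < w.1.2 ^+ 2 by rewrite -subr_gt0.
  have [_ _ _ gF] := Gr_inv _ w.1.1.1 w.1.1.2 w.1.2 w.2 h1 h2' h3.
  rewrite /Gfun in GE; rewrite GE /= in gF.
  rewrite Fmap_eq /= gF.
  by case: w {h1 h2 h3 h2' gF GE} => [[[]]].
Qed.
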